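(* Let $m\in\mathbb{Z}$, $p,q\in\{1,\dots,2n\}$, and assume $m+(p-n)_+\ge 1+(q-n)_+$, where $x_+=\max(x,0)$. Let $M_1\in M_p(m)$ and $M_2\in M_q(1)$. If $M_1\cdot M_2$ is a highest weight vector, then \[ M_1=\begin{cases}Y_p(m) & \text{if } p\in\{1,\dots,n\},\\ Y_{2n-p}(m-n+p) & \text{if } p\in\{n+1,\dots,2n\}.\end{cases} \]
   Context: Fix $n\ge 2$ and type $C_n$ with $I=\{1,\dots,n\}$. Let $\mathcal{M}$ be the set of Laurent monomials $M=\prod_{i\in I,k\in\mathbb{Z}}Y_i(k)^{y_i(k)}$ ($y_i(k)\in\mathbb{Z}$, finitely many nonzero); put $Y_0(k)=Y_{n+1}(k)=1$. For $i\in I$ put $\varepsilon_i(M)=\max_k(-\sum_{j>k}y_i(j))$; $M$ is a highest weight vector if $\varepsilon_i(M)=0$ for all $i\in I$ (equivalently all Kashiwara operators $\tilde e_i$ of Nakajima's monomial crystal kill $M$). The $X$-variables are $X_i(k)=Y_i(k)Y_{i-1}(k+1)^{-1}$ and $X_{\bar i}(k)=Y_{i-1}(k+n-i+1)Y_i(k+n-i+1)^{-1}$ for $1\le i\le n$, $k\in\mathbb{Z}$. The alphabet $\mathcal{I}=\{1,\dots,n,\bar n,\dots,\bar 1\}$ is ordered $1<\cdots<n<\bar n<\cdots<\bar 1$. For $1\le k\le 2n$, $m\in\mathbb{Z}$: $M_k(m)=\{X_{i_1}(k+m-1)X_{i_2}(k+m-2)\cdots X_{i_k}(m): i_j\in\mathcal{I},\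 i_1<\cdots<i_k\}$. (The quantity $m+(p-n)_+$ is called the height of a monomial of $M_p(m)$.) *)

(* Defs.v *)
From HB Require Import structures.
From mathcomp Require Import all_boot all_order all_algebra.
Set Implicit Arguments. Unset Strict Implicit. Unset Printing Implicit Defensive.
Import Order.TTheory GRing.Theory Num.Theory.
Local Open Scope ring_scope.

(* Type C_n, I = {1,..,n}.  A Laurent monomial prod Y_i(k)^{y_i(k)} is
   represented by a finite formal list of factors (i, k, e) meaning Y_i(k)^e;
   its exponent function is [yexp]. *)
Definition monomial := seq (nat * int * int).

Definition yexp (M : monomial) (i : nat) (k : int) : int :=
  \sum_(t <- M | (t.1.1 == i) && (t.1.2 == k)) t.2.

Definition tail (M : monomial) (i : nat) (k : int) : int :=
  \sum_(t <- M | (t.1.1 == i) && (k < t.1.2)) t.2.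

Definition mprod (M1 M2 : monomial) : monomial := M1 ++ M2.

Definition meq (n : nat) (M1 M2 : monomial) : Prop :=
  forall i k, (0 < i <= n)%N -> yexp M1 i k = yexp M2 i k.

(* eps_is M i z  <->  eps_i(M) = max_k (- sum_{j>k} y_i(j)) = z *)
Definition eps_is (M : monomial) (i : nat) (z : int) : Prop :=
  (exists k, - tail M i k = z) /\ (forall k, - tail M i k <= z).

Definition highest_weight (n : nat) (M : monomial) : Prop :=
  forall i, (0 < i <= n)%N -> eps_is M i 0.

(* Y_i(k)^e, with Y_0 = Y_{n+1} = 1 (indices outside I give the trivial monomial) *)
Definition Yv (n i : nat) (k e : int) : monomial :=
  if (0 < i <= n)%N then [:: (i, k, e)] else [::].

(* Letters of the alphabet 1 < ... < n < nbar < ... < 1bar are encoded by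
   a in {1,..,2n}: a <= n encodes a, a > n encodes bar(2n+1-a). *)
Definition Xv (n a : nat) (k : int) : monomial :=
  if (a <= n)%N then Yv n a k 1 ++ Yv n a.-1 (k + 1) (-1)
  else let i := (n.*2.+1 - a)%N in
       let k' := k + n%:Z - i%:Z + 1 in
       Yv n i.-1 k' 1 ++ Yv n i k' (-1).

Definition Xprod (n : nat) (s : seq nat) (m : int) : monomial :=
  flatten [seq Xv n (nth 0%N s j) (m + (size s)%:Z - 1 - j%:Z) | j <- iota 0 (size s)].

Definition inM (n p : nat) (m : int) (M : monomial) : Prop :=
  exists s : seq nat,
    [/\ size s = p, sorted ltn s, all (fun a => (0 < a <= n.*2)%N) s
      & meq n M (Xprod n s m)].

(* Main.v *)
Require Import Defs.
From mathcomp Require Import all_boot all_order all_algebra.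
From mathcomp Require Import zify.
Import Order.TTheory GRing.Theory Num.Theory.
Local Open Scope ring_scope.

Lemma tail_nil i k : tail [::] i k = 0.
Proof. by rewrite /tail big_nil. Qed.
Lemma tail_cons t M i k : tail (t :: M) i k =
  (if (t.1.1 == i) && (k < t.1.2) then t.2 else 0) + tail M i k.
Proof. by rewrite /tail big_cons; case: ifP => _; rewrite ?add0r. Qed.
Lemma tail_cat M1 M2 i k : tail (M1 ++ M2) i k = tail M1 i k + tail M2 i k.
Proof. by rewrite /tail big_cat. Qed.

Definition io (n g : nat) : nat := minn g (n.*2 - g).
Definition Dc (s : seq nat) (g : nat) : nat := count (fun y => g < y)%N s.
Definition Pf (n : nat) (b : int) (s : seq nat) (g : nat) : int :=
  b + (Dc s g)%:Z + (g - n)%N%:Z.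
Definition hh n i k b s g : int := if (io n g == i) && (k < Pf n b s g) then 1 else 0.

Lemma tail_Yv n j k0 e i k : tail (Yv n j k0 e) i k =
  if [&& (0 < j <= n)%N, j == i & k < k0] then e else 0.
Proof.
rewrite /Yv; case: ifP => hj /=; last by rewrite tail_nil.
by rewrite tail_cons tail_nil addr0 /=.
Qed.

Lemma Xprod_cons n x s b :
  Xprod n (x :: s) b = Xv n x (b + (size s)%:Z) ++ Xprod n s b.
Proof.
rewrite /Xprod /= -[1%N]addn0 iotaDl -map_comp /=.
congr (_ ++ _); first by congr (Xv _ _ _); lia.
congr flatten; apply: eq_map => j /=; congr (Xv _ _ _); lia.
Qed.

Lemma guard_simp n j i (P : bool) : (0 < i <= n)%N ->
  [&& (0 < j <= n)%N, j == i & P] = (j == i) && P.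
Proof. move=> hi; case: (j =P i) => [->|_]; first by rewrite hi. by rewrite /= andbF. Qed.

Lemma tail_Xv n x c i k : (0 < x <= n.*2)%N -> (0 < i <= n)%N ->
  tail (Xv n x c) i k =
  (if (io n x == i) && (k < c + (x - n)%N%:Z) then 1 else 0) -
  (if (io n x.-1 == i) && (k < c + 1 + (x.-1 - n)%N%:Z) then 1 else 0).
Proof.
move=> hx hi; rewrite /Xv /io; case: leqP => hxn.
  rewrite tail_cat !tail_Yv !guard_simp //.
  have -> : minn x (n.*2 - x) = x by lia.
  have -> : minn x.-1 (n.*2 - x.-1) = x.-1 by lia.
  have -> : (x - n)%N = 0%N by lia.
  have -> : (x.-1 - n)%N = 0%N by lia.
  rewrite !addr0.
  by case: ifP; case: ifP.
set ii := (n.*2.+1 - x)%N.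
rewrite tail_cat !tail_Yv !guard_simp //.
have -> : minn x (n.*2 - x) = ii.-1 by lia.
have -> : minn x.-1 (n.*2 - x.-1) = ii by lia.
have -> : c + n%:Z - ii%:Z + 1 = c + (x - n)%N%:Z by lia.
have -> : c + 1 + (x.-1 - n)%N%:Z = c + (x - n)%N%:Z by lia.
by case: ifP; case: ifP.
Qed.

Lemma tail_Xprod_letter n s b i k :
  sorted ltn s -> all (fun x => 0 < x <= n.*2)%N s -> (0 < i <= n)%N ->
  tail (Xprod n s b) i k = \sum_(x <- s) (hh n i k b s x - hh n i k b s x.-1).
Proof.
move=> hs ha hi; elim: s hs ha => [|x s IH] hs ha.
  by rewrite /Xprod /= tail_nil big_nil.
have hall : all (ltn x) s := order_path_min ltn_trans hs.
have hs' : sorted ltn s by exact: (path_sorted hs).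
move: ha => /= /andP[hx ha].
rewrite Xprod_cons tail_cat IH // big_cons (tail_Xv _ _ _ _ _ hx hi).
have Dx : Dc (x :: s) x = size s.
  by rewrite /Dc /= ltnn add0n; apply/eqP; rewrite -all_count.
have Dx1 : Dc (x :: s) x.-1 = (size s).+1.
  rewrite /Dc /=.
  have -> : (x.-1 < x)%N by lia.
  rewrite add1n; congr S; apply/eqP; rewrite -all_count.
  by apply/allP => y hy; have h : (x < y)%N := allP hall y hy; rewrite /=; lia.
congr (_ - _ + _).
- by rewrite /hh /Pf Dx.
- rewrite /hh /Pf Dx1; congr (if _ && _ then _ else _); congr (_ < _); lia.
apply: eq_big_seq => y hy.
have hxy : (x < y)%N := allP hall y hy.
have E1 : Dc (x :: s) y = Dc s y by rewrite /Dc /=; have -> : (y < x)%N = false by lia.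
have E2 : Dc (x :: s) y.-1 = Dc s y.-1 by rewrite /Dc /=; have -> : (y.-1 < x)%N = false by lia.
by rewrite /hh /Pf E1 E2.
Qed.

Lemma sum_seq_nat (s : seq nat) N (F : nat -> int) : uniq s -> all (fun x => x <= N)%N s ->
  \sum_(x <- s) F x = \sum_(0 <= g < N.+1) (g \in s)%:R * F g.
Proof.
move=> us ha.
have -> : \sum_(0 <= g < N.+1) (g \in s)%:R * F g = \sum_(0 <= g < N.+1 | g \in s) F g.
  by rewrite [RHS]big_mkcond; apply: eq_bigr => g _; case: (g \in s); rewrite ?mul1r ?mul0r.
rewrite -[RHS]big_filter; apply: perm_big; apply: uniq_perm => //.
  by apply: filter_uniq; exact: iota_uniq.
move=> x; rewrite mem_filter mem_index_iota; case hx: (x \in s) => //=.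
by have := allP ha x hx; lia.
Qed.

Lemma letter_boundary (s : seq nat) N (h : nat -> int) :
  uniq s -> all (fun x => 0 < x <= N)%N s -> h 0%N = 0 -> h N = 0 ->
  \sum_(x <- s) (h x - h x.-1) =
  \sum_(0 <= g < N) h g * ((g \in s)%:R - (g.+1 \in s)%:R).
Proof.
move=> us ha h0 hN.
have ha' : all (fun x => x <= N)%N s by apply/allP => x hx; have := allP ha x hx; lia.
rewrite big_split /= (sum_seq_nat s N h us ha') (sum_seq_nat s N (fun x => - h x.-1) us ha').
rewrite big_nat_recr //= hN mulr0 addr0 big_nat_recl //= h0 oppr0 mulr0 add0r.
rewrite -big_split /=; apply: eq_bigr => g _.
by rewrite mulrBr mulrN ![h g * _]mulrC.
Qed.

Definition sig (s : seq nat) (g : nat) : int := (g \in s)%:R - (g.+1 \in s)%:R.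

Lemma tail_Xprod n s b i k :
  sorted ltn s -> all (fun x => 0 < x <= n.*2)%N s -> (0 < i <= n)%N ->
  tail (Xprod n s b) i k = \sum_(0 <= g < n.*2) hh n i k b s g * sig s g.
Proof.
move=> hs ha hi; rewrite tail_Xprod_letter //.
have us : uniq s by move: hs; rewrite ltn_sorted_uniq_leq => /andP[].
apply: letter_boundary => //.
- rewrite /hh /io min0n; case: eqP => //= h; lia.
- rewrite /hh /io subnn minn0; case: eqP => //= h; lia.
Qed.

Lemma count_split (s : seq nat) z g : (z <= g)%N ->
  count (fun y => z < y)%N s = (count (fun y => g < y)%N s + count (fun y => z < y <= g)%N s)%N.
Proof. move=> hzg; elim: s => //= y s ->; case: (ltnP g y); case: (ltnP z y) => /=; lia. Qed.

Definition potf n b s g : int := Pf n b s g * (n.+1)%:Z + (io n g)%:Z.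

Lemma potf_lt n b1 s1 g1 b2 s2 g2 :
  Pf n b1 s1 g1 < Pf n b2 s2 g2 -> potf n b1 s1 g1 < potf n b2 s2 g2.
Proof.
rewrite /potf => h.
have h1 : (io n g1 <= n)%N by rewrite /io; lia.
set x := Pf n b1 s1 g1 in h *; set y := Pf n b2 s2 g2 in h *.
have : x * (n.+1)%:Z + (n.+1)%:Z <= y * (n.+1)%:Z.
  rewrite -[X in _ + X]mul1r -mulrDl; apply: ler_wpM2r => //; lia.
lia.
Qed.

Lemma potf_le n b1 s1 g1 b2 s2 g2 : io n g1 = io n g2 ->
  Pf n b1 s1 g1 <= Pf n b2 s2 g2 -> potf n b1 s1 g1 <= potf n b2 s2 g2.
Proof.
rewrite /potf => -> h; rewrite lerD2r; apply: ler_wpM2r => //.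
Qed.

Lemma run_below n b s z g : uniq s -> (z < g <= n.*2)%N ->
  (forall w, (z < w <= g)%N -> w \in s) -> potf n b s g < potf n b s z.
Proof.
move=> us hzg hw.
have hc : (g - z <= count (fun y => z < y <= g)%N s)%N.
  rewrite -size_filter -(size_iota z.+1 (g - z)); apply: uniq_leq_size; first exact: iota_uniq.
  move=> w; rewrite mem_iota mem_filter => hw'; apply/andP; split; first lia.
  apply: hw; lia.
have hzg' : (z <= g)%N by lia.
have := count_split s z g hzg'.
rewrite -/(Dc s z) -/(Dc s g) => hD.
have [hlt|hge] := ltP (Pf n b s g) (Pf n b s z); first exact: potf_lt.
rewrite /potf.
have hP : Pf n b s g = Pf n b s z by move: hge; rewrite /Pf; lia.
rewrite hP ltrD2l ltz_nat /io.
move: hge; rewrite /Pf; lia.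
Qed.

Lemma run_above n b s z g : (g < z)%N ->
  (forall w, (g < w <= z)%N -> w \notin s) -> potf n b s g < potf n b s z.
Proof.
move=> hzg hw.
have hc : count (fun y => g < y <= z)%N s = 0%N.
  apply/eqP; rewrite -leqn0 leqNgt -has_count; apply/hasP => -[w hws /andP[h1 h2]].
  by have := hw w; rewrite h1 h2 hws => /(_ isT).
have hzg' : (g <= z)%N by lia.
have := count_split s g z hzg'.
rewrite -/(Dc s z) -/(Dc s g) hc addn0 => hD.
have [hlt|hge] := ltP (Pf n b s g) (Pf n b s z); first exact: potf_lt.
rewrite /potf.
have hP : Pf n b s g = Pf n b s z by move: hge; rewrite /Pf hD; lia.
rewrite hP ltrD2l ltz_nat /io.
move: hge; rewrite /Pf hD; lia.
Qed.

Lemma neg_bound n b s p z : uniq s -> all (fun x => 0 < x)%N s -> size s = p ->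
  (0 < z)%N -> z \notin s -> z.+1 \in s -> b + (p - n)%N%:Z + 1 <= Pf n b s z.
Proof.
move=> us ha hsz hz0 hz hz1.
have h1 : (0 < Dc s z)%N by rewrite /Dc -has_count; apply/hasP; exists z.+1.
have h2 : (count (predC (fun y => z < y)%N) s <= z.-1)%N.
  rewrite -size_filter -(size_iota 1 z.-1); apply: uniq_leq_size; first exact: filter_uniq.
  move=> w; rewrite mem_filter mem_iota /= => /andP[hw1 hw2].
  have := allP ha w hw2; have : w != z by apply: contraNneq hz => <-.
  lia.
have := count_predC (fun y => z < y)%N s; rewrite -/(Dc s z) hsz => h3.
rewrite /Pf; lia.
Qed.

Lemma up_col n b s g : uniq s -> all (fun x => 0 < x <= n.*2)%N s ->
  g \in s -> g.+1 \notin s -> (g < n.*2)%N ->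
  (exists z, [/\ (0 < z)%N, z \notin s, z.+1 \in s & potf n b s g < potf n b s z]) \/
  ((forall w, (0 < w <= g)%N -> w \in s) /\ (forall w, w \in s -> (w <= g)%N)).
Proof.
move=> us ha hg hg1 hgn.
have hg0 : (0 < g)%N by have := allP ha g hg; lia.
case: (boolP [exists z : 'I_g, (0 < z)%N && ((z : nat) \notin s)]) => [/existsP[z0 /andP[hz0 hz0s]]|hA].
  pose P := fun z => (0 < z < g)%N && (z \notin s).
  have exP : exists z, P z by exists z0; rewrite /P hz0 hz0s ltn_ord.
  have ubP : forall z, P z -> (z <= g)%N by move=> z /andP[/andP[_ h] _]; lia.
  case: (ex_maxnP exP ubP) => z /andP[/andP[hz1 hz2] hz3] hmax.
  have hin : forall w, (z < w <= g)%N -> w \in s.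
    move=> w hw; case: (ltngtP w g) => hwg; last by rewrite hwg.
    - apply/negPn/negP => hws; have := hmax w; rewrite /P hws andbT.
      have -> : (0 < w < g)%N by lia.
      move=> /(_ isT); lia.
    - lia.
  left; exists z; split => //.
    apply: hin; lia.
  apply: run_below => //; lia.
have hA' : forall w, (0 < w <= g)%N -> w \in s.
  move=> w hw; case: (ltngtP w g) => hwg; last by rewrite hwg.
  - apply/negPn/negP => hws; move/existsP: hA; apply; exists (Ordinal hwg).
    by rewrite /= hws andbT; lia.
  - lia.
case: (boolP (has (fun w => g < w)%N s)) => [/hasP[w0 hw0 hw0g]|hB].
  pose P := fun w => (g < w)%N && (w \in s).
  have exP : exists w, P w by exists w0; rewrite /P hw0 hw0g.
  case: (ex_minnP exP) => y /andP[hy1 hy2] hmin.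
  have hyg : (g.+1 < y)%N.
    case: (ltngtP g.+1 y) => // h; first lia.
    by move: hg1; rewrite h hy2.
  have hnot : forall w, (g < w < y)%N -> w \notin s.
    move=> w hw; apply/negP => hws; have := hmin w; rewrite /P hws andbT.
    have -> : (g < w)%N by lia.
    move=> /(_ isT); lia.
  left; exists y.-1; split.
  - lia.
  - apply: hnot; lia.
  - by have -> : y.-1.+1 = y by lia.
  apply: run_above; first lia.
  move=> w hw; apply: hnot; lia.
right; split => // w hw.
by rewrite leqNgt; apply: contra hB => h; apply/hasP; exists w.
Qed.

Lemma sum2_pos N (f1 f2 : nat -> int) g0 : (g0 < N)%N -> f1 g0 < 0 ->
  0 <= \sum_(0 <= g < N) f1 g + \sum_(0 <= g < N) f2 g ->
  (exists2 g, (g < N)%N & 0 < f1 g) \/ (exists2 g, (g < N)%N & 0 < f2 g).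
Proof.
move=> hg0 hf hs.
case: (boolP [exists g : 'I_N, 0 < f1 g]) => [/existsP[g hg]|h1].
  by left; exists g.
case: (boolP [exists g : 'I_N, 0 < f2 g]) => [/existsP[g hg]|h2].
  by right; exists g.
exfalso.
have A1 : \sum_(0 <= g < N) f1 g <= f1 g0.
  rewrite big_mkord (bigD1 (Ordinal hg0)) //= -[X in _ <= X]addr0 lerD2l.
  apply: sumr_le0 => i _; rewrite leNgt; apply/negP => hi.
  by move/existsP: h1; apply; exists i.
have A2 : \sum_(0 <= g < N) f2 g <= 0.
  rewrite big_mkord; apply: sumr_le0 => i _; rewrite leNgt; apply/negP => hi.
  by move/existsP: h2; apply; exists i.
have := lerD A1 A2; rewrite addr0 => h.
have := le_trans hs h; rewrite leNgt hf.
by [].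
Qed.

Lemma pos_extract n i k b s g : 0 < hh n i k b s g * sig s g ->
  [/\ io n g = i, k < Pf n b s g, g \in s & g.+1 \notin s].
Proof.
rewrite /hh /sig; case: ifP => [/andP[/eqP h1 h2]|_]; last by rewrite mul0r ltxx.
by case: (g \in s); case: (g.+1 \in s).
Qed.

Lemma io_range n z : (0 < z)%N -> (z < n.*2)%N -> (0 < io n z <= n)%N.
Proof. rewrite /io; lia. Qed.

Lemma lt_sub1 (a b : int) : a - 1 < b -> a <= b.
Proof. lia. Qed.

Lemma sub1_lt (a : int) : a - 1 < a.
Proof. lia. Qed.

Lemma arith_final (m x : int) n p q g : (g <= q)%N ->
  1 + (q - n)%N%:Z <= m + (p - n)%N%:Z -> m + (p - n)%N%:Z + 1 <= x ->
  1 + 0%N%:Z + (g - n)%N%:Z < x.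
Proof. lia. Qed.

Lemma arith_bound (bb : int) (m : int) n p q (d z : nat) :
  bb <= (`|m|%N)%:Z + 1 -> (d <= p + q)%N -> (z < n.*2)%N ->
  bb + d%:Z + (z - n)%N%:Z <= (`|m| + 1 + p + q + n.*2)%N%:Z.
Proof. lia. Qed.

Lemma potf_bound n b s z (X : int) : (z < n.*2)%N -> Pf n b s z <= X ->
  potf n b s z < X * (n.+1)%:Z + (n.+1)%:Z.
Proof.
move=> hz hP; rewrite /potf.
have h0 : (0 : int) <= (n.+1)%:Z by [].
have h1 := ler_wpM2r h0 hP.
move: h1; set u := Pf n b s z * _; set v := X * _ => h1.
have h2 : (io n z)%:Z < (n.+1)%:Z by rewrite ltz_nat /io; lia.
exact: (ler_ltD h1 h2).
Qed.

Lemma term_step (U a b : int) (N : nat) : U - a <= N.+1%:Z -> a < b -> U - b <= N%:Z.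
Proof. lia. Qed.

Lemma term_base (U a : int) : U - a <= 0%N%:Z -> a < U -> False.
Proof. lia. Qed.

Lemma main_comb n p q (m : int) s1 s2 :
  sorted ltn s1 -> sorted ltn s2 ->
  all (fun x => 0 < x <= n.*2)%N s1 -> all (fun x => 0 < x <= n.*2)%N s2 ->
  size s1 = p -> size s2 = q -> 1 + (q - n)%N%:Z <= m + (p - n)%N%:Z ->
  (forall i k, (0 < i <= n)%N ->
     0 <= \sum_(0 <= g < n.*2) hh n i k m s1 g * sig s1 g +
          \sum_(0 <= g < n.*2) hh n i k 1 s2 g * sig s2 g) ->
  forall z0, (0 < z0)%N -> z0 \notin s1 -> z0.+1 \in s1 -> False.
Proof.
move=> hs1 hs2 ha1 ha2 hp hq hhgt H z0 hz0 hz0n hz0s.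
have us1 : uniq s1 by move: hs1; rewrite ltn_sorted_uniq_leq => /andP[].
have us2 : uniq s2 by move: hs2; rewrite ltn_sorted_uniq_leq => /andP[].
pose S := fun c : bool => if c then s1 else s2.
pose B := fun c : bool => if c then m else 1.
have usS : forall c, uniq (S c) by case.
have haS : forall c, all (fun x => 0 < x <= n.*2)%N (S c) by case.
pose negev c z := [&& (0 < z)%N, z \notin S c & z.+1 \in S c].
have climb : forall c z, negev c z -> exists c' z',
    negev c' z' /\ potf n (B c) (S c) z < potf n (B c') (S c') z'.
  move=> c z /and3P[hz hzn hzs].
  have hz2n : (z < n.*2)%N by case/andP: (allP (haS c) _ hzs).
  pose i := io n z.
  have hi : (0 < i <= n)%N by exact: io_range.
  pose k := Pf n (B c) (S c) z - 1.
  pose f c' g := hh n i k (B c') (S c') g * sig (S c') g.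
  have hf : f c z < 0.
    rewrite /f /hh /sig eqxx /=.
    have -> : k < Pf n (B c) (S c) z by exact: sub1_lt.
    by rewrite (negbTE hzn) hzs.
  have HH0 : forall c0 : bool, 0 <= \sum_(0 <= g < n.*2) f c0 g + \sum_(0 <= g < n.*2) f (~~ c0) g.
    by case => /=; [exact: H | rewrite addrC; exact: H].
  have HH := HH0 c.
  have [c' [g' hg' hpos]] : exists c', exists2 g', (g' < n.*2)%N & 0 < f c' g'.
    case: (@sum2_pos _ (f c) (f (~~ c)) z hz2n hf HH) => -[g' hg' hpos]; [exists c | exists (~~ c)]; by exists g'.
  case: (pos_extract _ _ _ _ _ _ hpos) => hio hk hg'in hg'out.
  have hle : potf n (B c) (S c) z <= potf n (B c') (S c') g'.
    apply: potf_le; first by rewrite hio.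
    exact: lt_sub1 hk.
  case: (up_col _ (B c') _ _ (usS c') (haS c') hg'in hg'out hg') => [[z' [h1 h2 h3 h4]]|[hini hmax]].
    exists c', z'; split; first by rewrite /negev h1 h2 h3.
    exact: le_lt_trans hle h4.
  case: c' {hpos hle hio hk hg'in hg'out hini hmax} (hini) (hmax) (hle) => hini' hmax' hle'.
    exfalso; have h := hmax' _ hz0s.
    have : z0 \in s1 by apply: hini'; rewrite hz0 (ltnW h).
    by rewrite (negbTE hz0n).
  exists true, z0; split; first by rewrite /negev hz0 hz0n hz0s.
  apply: (lt_le_trans _ (le_refl _)); apply: (le_lt_trans hle'); apply: potf_lt.
  have hgq : (g' <= q)%N.
    rewrite -hq -(size_iota 1 g'); apply: uniq_leq_size; first exact: iota_uniq.
    by move=> w; rewrite mem_iota add1n ltnS => hw; apply: hini'.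
  have hD : Dc s2 g' = 0%N.
    apply/eqP; rewrite -leqn0 leqNgt -has_count; apply/hasP => -[w hw hw'].
    by have := hmax' w hw; rewrite leqNgt hw'.
  have ha1' : all (fun x => 0 < x)%N s1 by apply/allP => x hx; case/andP: (allP ha1 x hx).
  have hb := neg_bound n m _ _ _ us1 ha1' hp hz0 hz0n hz0s.
  rewrite /= /Pf hD in hb *; exact: arith_final hgq hhgt hb.
pose X : int := (`|m| + 1 + p + q + n.*2)%N%:Z.
pose U : int := X * (n.+1)%:Z + (n.+1)%:Z.
have bound : forall c z, negev c z -> potf n (B c) (S c) z < U.
  move=> c z /and3P[hz hzn hzs].
  have hz2n : (z < n.*2)%N by case/andP: (allP (haS c) _ hzs).
  have hDc : (Dc (S c) z <= p + q)%N.
    apply: leq_trans (count_size _ _) _; case: c {hzn hzs} => /=; rewrite ?hp ?hq ?leq_addr ?leq_addl //.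
  have hB : B c <= (`|m|%N)%:Z + 1.
    case: c {hzn hzs hDc} => /=; last by rewrite -[X in X <= _]add0r lerD2r.
    by apply: ler_wpDr => //; rewrite abszE; exact: ler_norm.
  apply: potf_bound => //.
  exact: arith_bound hB hDc hz2n.
have term : forall N : nat, forall c z, negev c z ->
    U - potf n (B c) (S c) z <= N%:Z -> False.
  elim => [|N IH] c z hneg hle.
    exact: term_base hle (bound c z hneg).
  case: (climb c z hneg) => c' [z' [hneg' hlt]].
  exact: (IH c' z' hneg' (term_step _ _ _ _ hle hlt)).
have hneg0 : negev true z0 by rewrite /negev hz0 hz0n hz0s.
apply: (term `|U - potf n (B true) (S true) z0|%N true z0 hneg0).
rewrite abszE; exact: ler_norm.
Qed.

Lemma canon n s p : sorted ltn s -> all (fun x => 0 < x <= n.*2)%N s -> size s = p ->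
  (forall z, (0 < z)%N -> z \notin s -> z.+1 \in s -> False) -> s = iota 1 p.
Proof.
move=> hs ha hsz hno.
have us : uniq s by move: hs; rewrite ltn_sorted_uniq_leq => /andP[].
have down : forall d w, (0 < w)%N -> (w + d)%N \in s -> w \in s.
  elim => [|d IH] w hw; first by rewrite addn0.
  move=> hwd; have h1 : w.+1 \in s by apply: IH => //; rewrite addSnnS.
  by apply/negPn/negP => hn; apply: (hno w hw hn h1).
have down' : forall y w, y \in s -> (0 < w <= y)%N -> w \in s.
  move=> y w hy hw; apply: (down (y - w)%N) => //; first lia.
  by have -> : (w + (y - w))%N = y by lia.
apply: (irr_sorted_eq ltn_trans ltnn hs (iota_ltn_sorted 1 p)) => x.
rewrite mem_iota; apply/idP/idP => [hx|hx].
  have := allP ha x hx => /andP[hx0 _]; rewrite hx0 /=.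
  rewrite add1n ltnS leqNgt; apply/negP => hxp.
  have : (x <= size s)%N.
    rewrite -(size_iota 1 x); apply: uniq_leq_size; first exact: iota_uniq.
    by move=> w; rewrite mem_iota => hw; apply: (down' x) => //; lia.
  lia.
apply/negPn/negP => hxn.
have hlt : forall y, y \in s -> (y < x)%N.
  move=> y hy; rewrite ltnNge; apply/negP => hxy; apply: (negP hxn); apply: (down' y) => //; lia.
have : (size s <= x.-1)%N.
  rewrite -(size_iota 1 x.-1); apply: uniq_leq_size => // w hw.
  have := hlt w hw; have := allP ha w hw; rewrite mem_iota; lia.
lia.
Qed.

Lemma sum_pick N p (c : int) :
  \sum_(0 <= g < N) (if g == p then c else 0) = if (p < N)%N then c else 0.
Proof.
elim: N => [|N IH]; first by rewrite big_geq // ltn0.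
rewrite big_nat_recr //= IH.
case: (ltngtP p N) => h.
- have -> : (p < N.+1)%N by lia. by rewrite addr0.
- have -> : (p < N.+1)%N = false by lia. by rewrite addr0.
- by rewrite h add0r ltnSn.
Qed.

Lemma tail_canon n p m i k : (0 < p <= n.*2)%N -> (0 < i <= n)%N ->
  \sum_(0 <= g < n.*2) hh n i k m (iota 1 p) g * sig (iota 1 p) g =
  tail (if (p <= n)%N then Yv n p m 1 else Yv n (n.*2 - p) (m - n%:Z + p%:Z) 1) i k.
Proof.
move=> hp hi.
rewrite (eq_bigr (fun g => if g == p then hh n i k m (iota 1 p) p else 0)); last first.
  move=> g _; rewrite /sig !mem_iota.
  case: (ltngtP g p) => h.
  - have hgp : (g == p) = false by apply/negbTE; rewrite neq_ltn h.
    rewrite ?hgp.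
    have -> : (1 <= g.+1 < 1 + p)%N by lia.
    case: g h hgp => [|g] h _.
    + rewrite /= sub0r mulrN1 /hh /io min0n.
      have -> : (0 == i) = false by apply/negbTE; rewrite eq_sym -lt0n; case/andP: hi.
      by rewrite /= oppr0.
    + have -> : (1 <= g.+1 < 1 + p)%N by lia.
      by rewrite subrr mulr0.
  - have hgp : (g == p) = false by apply/negbTE; rewrite neq_ltn h orbT.
    rewrite ?hgp.
  - have -> : (1 <= g < 1 + p)%N = false by lia.
    have -> : (1 <= g.+1 < 1 + p)%N = false by lia.
    by rewrite subrr mulr0.
  - rewrite h.
    have -> : (1 <= p < 1 + p)%N by lia.
    have -> : (1 <= p.+1 < 1 + p)%N = false by lia.
    by rewrite subr0 mulr1.
rewrite sum_pick /hh /Pf /Dc.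
have -> : count (fun y => p < y)%N (iota 1 p) = 0%N.
  apply/eqP; rewrite -leqn0 leqNgt -has_count; apply/hasP => -[w]; rewrite mem_iota; lia.
rewrite addr0; case: (leqP p n) => hpn /=.
  have -> : (p < n.*2)%N by lia.
  rewrite tail_Yv guard_simp //.
  have -> : io n p = p by rewrite /io; lia.
  have -> : (p - n)%N = 0%N by lia.
  by rewrite addr0.
rewrite tail_Yv.
case: (ltngtP p n.*2) => hp2.
- rewrite guard_simp //.
  have -> : io n p = (n.*2 - p)%N by rewrite /io; lia.
  by have -> : m + (p - n)%N%:Z = m - n%:Z + p%:Z by lia.
- lia.
- by rewrite hp2 subnn.
Qed.

Lemma yexp_tail M i k : yexp M i k = tail M i (k - 1) - tail M i k.
Proof.
elim: M => [|t M IH]; first by rewrite /yexp /tail !big_nil subrr.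
rewrite /yexp big_cons -/(yexp M i k) !tail_cons IH.
have E : (k - 1 < t.1.2) = (t.1.2 == k) || (k < t.1.2).
  by apply/idP/idP => [h|]; [apply/orP; lia | case/orP; lia].
rewrite E; case: (t.1.1 == i) => /=; last by rewrite !add0r.
case: eqP => [->|_] /=; rewrite ?ltxx /=; lia.
Qed.

Lemma tail_big M i k K : (forall t, t \in M -> t.1.2 <= K) -> K <= k -> tail M i k = 0.
Proof.
elim: M => [|t M IH] H hK; first by rewrite tail_nil.
rewrite tail_cons IH; last by [] ; last by move=> u hu; apply: H; rewrite inE hu orbT.
have := H t (mem_head _ _). case: ifP => // /andP[_ h1] h2.
by have := lt_le_trans h1 (le_trans h2 hK); rewrite ltxx.
Qed.

Lemma tail_step M i k : tail M i k = yexp M i (k + 1) + tail M i (k + 1).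
Proof. by rewrite yexp_tail addrK subrK. Qed.

Lemma tail_meq n M X i k : meq n M X -> (0 < i <= n)%N -> tail M i k = tail X i k.
Proof.
move=> hm hi.
set N := (\max_(t <- M ++ X) `|t.1.2 - k|)%N.
have hb : forall t, t \in M ++ X -> t.1.2 <= k + N%:Z.
  move=> t ht. have := @leq_bigmax_seq _ (M ++ X) xpredT (fun t : nat * int * int => `|t.1.2 - k|)%N t ht isT.
  rewrite -/N => h. have h2 : t.1.2 - k <= (`|t.1.2 - k|%N)%:Z by rewrite abszE; exact: ler_norm.
  move: h h2; set a := absz _; set y := t.1.2; move=> h h2; lia.
have gen : forall d : nat, tail M i (k + N%:Z - d%:Z) = tail X i (k + N%:Z - d%:Z).
  elim => [|d IH].
    rewrite subr0 (@tail_big M i _ (k + N%:Z)) ?(@tail_big X i _ (k + N%:Z)) //.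
    - by move=> t ht; apply: hb; rewrite mem_cat ht orbT.
    - by move=> t ht; apply: hb; rewrite mem_cat ht.
  rewrite tail_step [in RHS]tail_step hm //.
  have -> : k + N%:Z - d.+1%:Z + 1 = k + N%:Z - d%:Z by lia.
  by rewrite IH.
by have := gen N; have -> : k + N%:Z - N%:Z = k by lia.
Qed.

Theorem theorem5p10 (n : nat) (hn : (2 <= n)%N) (m : int) (p q : nat)
  (hp : (1 <= p <= n.*2)%N) (hq : (1 <= q <= n.*2)%N)
  (hheight : m + (p - n)%N%:Z >= 1 + (q - n)%N%:Z)
  (M1 M2 : monomial)
  (hM1 : inM n p m M1) (hM2 : inM n q 1 M2)
  (hhw : highest_weight n (mprod M1 M2)) :
  meq n M1 (if (p <= n)%N then Yv n p m 1
            else Yv n (n.*2 - p) (m - n%:Z + p%:Z) 1).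
Proof.
case: hM1 => s1 [hsz1 hs1 ha1 hmeq1].
case: hM2 => s2 [hsz2 hs2 ha2 hmeq2].
have H : forall i k, (0 < i <= n)%N ->
     0 <= \sum_(0 <= g < n.*2) hh n i k m s1 g * sig s1 g +
          \sum_(0 <= g < n.*2) hh n i k 1 s2 g * sig s2 g.
  move=> i k hi.
  have [_ hall] := hhw i hi.
  have := hall k.
  rewrite /mprod tail_cat (tail_meq _ _ _ _ _ hmeq1 hi) (tail_meq _ _ _ _ _ hmeq2 hi).
  rewrite !tail_Xprod //; lia.
have hno := main_comb _ _ _ _ _ _ hs1 hs2 ha1 ha2 hsz1 hsz2 hheight H.
have hcan := canon _ _ _ hs1 ha1 hsz1 hno.
move=> i k hi.
rewrite !yexp_tail !(tail_meq _ _ _ _ _ hmeq1 hi) !tail_Xprod // hcan.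
have hp' : (0 < p <= n.*2)%N by lia.
by rewrite !tail_canon.
Qed.
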